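(* Let $X$ be a finite or countably infinite set, let $q$ be a probability distribution on $X$, and let $\mathcal{S}=\langle x_1,\dots,x_n\rangle\in X^n$ be a sample. Let $a\ge 0$ and suppose $f:X\to[0,1]$ has training advantage $\hat\alpha(f)\ge a$. Define the probability distribution $q'(x)=q(x)e^{-af(x)}/Z_{q'}$ where $Z_{q'}=\sum_{x\in X}q(x)e^{-af(x)}$. Then $$\hat{L}(q';\mathcal{S})\le\hat{L}(q;\mathcal{S})-a^2/2.$$
   Context: The log-loss of a distribution $q$ on the sample is $\hat{L}(q;\mathcal{S})=-\frac{1}{n}\sum_{i=1}^n\log q(x_i)$. The empirical expectation is $\hat{\mathrm{E}}_{\mathcal{S}}[h(x)]=\frac1n\sum_{i=1}^n h(x_i)$. The training advantage of $f:X\to[0,1]$ (relative to $q$ and $\mathcal{S}$) is $\hat\alpha(f)=\mathrm{E}_{x\sim q}[f(x)]-\hat{\mathrm{E}}_{\mathcal{S}}[f(x)]$. *)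

(* Defs.v *)
From mathcomp Require Import all_boot all_order all_algebra.
From mathcomp Require Import all_classical all_reals all_analysis.
Set Implicit Arguments. Unset Strict Implicit. Unset Printing Implicit Defensive.
Import Order.TTheory GRing.Theory Num.Theory.
Local Open Scope classical_set_scope.
Local Open Scope ring_scope.

(* X is a countType (finite or countably infinite). Sums over X are the
   (unordered, nonnegative) extended-real sums \esum over [set: X]. *)

Definition is_distr (R : realType) (X : countType) (q : X -> R) : Prop :=
  (forall x, 0 <= q x) /\ (\esum_(x in [set: X]) (q x)%:E = 1%E).

Definition expect (R : realType) (X : countType) (q : X -> R) (h : X -> R) : R :=
  fine (\esum_(x in [set: X]) (q x * h x)%:E).

Definition emp_expect (R : realType) (X : Type) (n : nat) (S : 'I_n -> X)
  (h : X -> R) : R := n%:R^-1 * \sum_(i < n) h (S i).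

Definition neglogE (R : realType) (p : R) : \bar R :=
  if 0 < p then (- ln p)%:E else +oo%E.

Definition log_loss (R : realType) (X : Type) (q : X -> R) (n : nat)
  (S : 'I_n -> X) : \bar R :=
  ((n%:R^-1)%:E * \sum_(i < n) neglogE (q (S i)))%E.

Definition train_adv (R : realType) (X : countType) (q : X -> R) (n : nat)
  (S : 'I_n -> X) (f : X -> R) : R :=
  expect q f - emp_expect S f.

Definition Zq (R : realType) (X : countType) (q : X -> R) (a : R) (f : X -> R) : R :=
  fine (\esum_(x in [set: X]) (q x * expR (- (a * f x)))%:E).

Definition tilt (R : realType) (X : countType) (q : X -> R) (a : R) (f : X -> R)
  : X -> R := fun x => q x * expR (- (a * f x)) / Zq q a f.

(* Main.v *)
Require Import Defs.
From mathcomp Require Import all_boot all_order all_algebra.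
From mathcomp Require Import all_classical all_reals all_analysis.
Import Order.TTheory GRing.Theory Num.Theory.
From mathcomp Require Import lra ring.
Local Open Scope classical_set_scope.
Local Open Scope ring_scope.

Lemma expR_ge3 (R : realType) (x : R) : 0 <= x -> 1 + x + x ^+ 2 / 2 <= expR x.
Proof.
move=> x0; rewrite /expR.
have := @nondecreasing_cvgn_le R (series (exp_coeff x)).
move=> /(_ _ (is_cvg_series_exp_coeff x) 3%N).
have -> : series (exp_coeff x) 3 = 1 + x + x ^+ 2 / 2.
  rewrite /series /= !big_nat_recr //= big_geq // /exp_coeff /=.
  by rewrite add0r expr0 expr1 !divr1 /= ?mulr1 ?mul1r /=; rewrite /factorial /=.
apply; apply: nondecreasing_series => n _ _.
by rewrite /exp_coeff /= divr_ge0 // exprn_ge0.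
Qed.
Lemma esumZ (R : realType) (T : choiceType) (I : set T) (a : T -> \bar R) (c : R) :
  0 <= c -> (forall i, (0 <= a i)%E) ->
  (\esum_(i in I) (c%:E * a i) = c%:E * \esum_(i in I) a i)%E.
Proof.
move=> c0 a0; rewrite /esum -ereal_supZl //; last first.
  by apply/set0P; exists (\sum_(x \in set0) a x)%E; exists set0 => //; exact: fsets_set0.
congr ereal_sup; apply/seteqP; split => x [A hA <-].
  by exists (\sum_(x \in A) a x)%E; [exists A|rewrite ge0_mule_fsumr].
move: hA => [B hB <-]; by exists B => //; rewrite ge0_mule_fsumr.
Qed.
Lemma exp_cvx (R : realType) (a t : R) : 0 <= t -> t <= 1 ->
  expR (- (a * t)) <= 1 - (1 - expR (- a)) * t.
Proof.
move=> t0 t1.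
have := @convex_expR R (Itv01 t0 t1) (- a) 0.
rewrite !convRE /= expR0 mulr0 addr0.
have -> : t * - a = - (a * t) by rewrite mulrN mulrC.
move=> h; apply: (le_trans h); rewrite /unstable.onem; lra.
Qed.

Lemma expN_le (R : realType) (a : R) : 0 <= a -> expR (- a) <= 1 - a + a ^+ 2 / 2.
Proof.
move=> a0; have h3 := @expR_ge3 R a a0.
have h1 : expR a * expR (- a) = 1 by rewrite expRxMexpNx_1.
have ep := expR_gt0 (- a).
have -> : a ^+ 2 / 2 = a * a / 2 by rewrite expr2.
move: h3; rewrite expr2 => h3.
nra.
Qed.

Theorem lemma1 (R : realType) (X : countType) (q : X -> R) (n : nat)
  (S : 'I_n -> X) (a : R) (f : X -> R) :
  is_distr q -> (0 < n)%N -> 0 <= a ->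
  (forall x, 0 <= f x <= 1) ->
  a <= train_adv q S f ->
  (log_loss (tilt q a f) S <= log_loss q S - (a ^+ 2 / 2)%:E)%E.
Proof.
move=> [q0 q1] n0 a0 f01 hadv.
set e := expR (- a).
have e0 : 0 < e := expR_gt0 _.
have e1 : e <= 1 by rewrite /e expR_le1 oppr_le0.
have fx0 x : 0 <= f x by case/andP: (f01 x).
have fx1 x : f x <= 1 by case/andP: (f01 x).
have g0 x : 0 <= q x * expR (- (a * f x)) by rewrite mulr_ge0 ?expR_ge0.
have gle x : q x * expR (- (a * f x)) + (1 - e) * (q x * f x) <= q x.
  have h := @exp_cvx R a (f x) (fx0 x) (fx1 x); have := q0 x; rewrite -/e in h; nra.
have ge x : e * q x <= q x * expR (- (a * f x)).
  have : e <= expR (- (a * f x)).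
    rewrite /e ler_expR lerN2; have := fx1 x; have := fx0 x; nra.
  have := q0 x; nra.
have qf0 x : 0 <= q x * f x by rewrite mulr_ge0.
have qf1 x : q x * f x <= q x by have := q0 x; have := fx1 x; nra.
set A := (\esum_(x in [set: X]) (q x * expR (- (a * f x)))%:E)%E.
set B := (\esum_(x in [set: X]) (q x * f x)%:E)%E.
have A1 : (A + (1 - e)%:E * B <= 1)%E.
  rewrite /B -esumZ; last 2 first.
  - by rewrite subr_ge0.
  - by move=> x; rewrite lee_fin.
  rewrite /A -esumD; last 2 first.
  - by move=> x _; rewrite lee_fin.
  - by move=> x _; rewrite -EFinM lee_fin mulr_ge0 ?subr_ge0.
  rewrite -q1; apply: le_esum => x _; rewrite -EFinM -EFinD lee_fin; exact: gle.
have Ae : (e%:E <= A)%E.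
  rewrite -[e%:E]mule1 -q1 -esumZ; last 2 first.
  - exact: ltW.
  - by move=> x; rewrite lee_fin.
  by apply: le_esum => x _; rewrite -EFinM lee_fin.
have B0 : (0 <= B)%E by apply: esum_ge0 => x _; rewrite lee_fin.
have B1 : (B <= 1)%E by rewrite -q1; apply: le_esum => x _; rewrite lee_fin.
have A0 : (0 <= A)%E by apply: le_trans Ae; rewrite lee_fin ltW.
have Ale1 : (A <= 1)%E.
  apply: le_trans A1; rewrite leeDl // mule_ge0 // lee_fin subr_ge0 //.
have Afin : A \is a fin_num by rewrite ge0_fin_numE // (le_lt_trans Ale1) // ltry.
have Bfin : B \is a fin_num by rewrite ge0_fin_numE // (le_lt_trans B1) // ltry.
have ZE : Zq q a f = fine A by [].
have EE : expect q f = fine B by [].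
move: (fineK Afin) (fineK Bfin) A1 Ae B0 B1 ZE EE.
set Z := fine A; set E := fine B => <- <- A1' Ae' B0' B1' ZE EE.
move: A1' Ae' B0' B1'; rewrite -EFinM -EFinD !lee_fin => A1' Ae' B0' B1'.
have Z0 : 0 < Z by apply: lt_le_trans Ae'.
have pt i : neglogE (tilt q a f (S i)) =
    (neglogE (q (S i)) + (a * f (S i) + ln Z)%:E)%E.
  rewrite /neglogE /tilt ZE.
  have [hq|hq] := ltP 0 (q (S i)).
    have tp : 0 < q (S i) * expR (- (a * f (S i))) / Z.
      by rewrite divr_gt0 // mulr_gt0 // expR_gt0.
    rewrite tp -EFinD; congr EFin.
    rewrite ln_div ?posrE ?mulr_gt0 ?expR_gt0 // lnM ?posrE ?expR_gt0 // expRK.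
    lra.
  have -> : q (S i) = 0 by apply/le_anti; rewrite hq q0.
  by rewrite !mul0r ltxx.
rewrite /log_loss.
under eq_bigr do rewrite pt.
rewrite big_split /=.
rewrite sumEFin muleDr ?fin_num_adde_defl // -EFinM.
apply: leeD => //; rewrite lee_fin.
rewrite big_split /= -mulr_sumr sumr_const card_ord.
move: hadv; rewrite /train_adv EE /emp_expect => hadv.
have nn : n%:R != 0 :> R by rewrite pnatr_eq0 -lt0n.
have -> : n%:R^-1 * (a * \sum_(i < n) f (S i) + ln Z *+ n) =
    a * (n%:R^-1 * \sum_(i < n) f (S i)) + ln Z.
  by rewrite -mulr_natr; field.
have h0 : 0 <= n%:R^-1 * \sum_(i < n) f (S i).
  by rewrite mulr_ge0 ?invr_ge0 ?ler0n // sumr_ge0.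
move: hadv h0; set h := n%:R^-1 * _ => hadv h0.
have lnZ : ln Z <= Z - 1.
  have := @le_ln1Dx R (Z - 1); have -> : 1 + (Z - 1) = Z by ring.
  apply; lra.
have h5 := @expN_le R a a0; rewrite -/e in h5.
have h1 : a * h <= a * (E - a) by rewrite ler_wpM2l //; lra.
have h4 : E * (a - 1 + e) <= a - 1 + e.
  have := expR_ge1Dx (- a); rewrite -/e.
  move=> h6; rewrite -[X in _ <= X]mul1r ler_wpM2r //; lra.
nra.
Qed.
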